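(* Let $L$ be an infinite set and let $Q$ be either the edgeless cube $Q_L$ or the edged cube $\bar Q_L$. If $s$ is a universally convergent basic sequence and $f$ is the terminal labelling obtained by applying $s$ to the identity labelling of $Q$, then $f:Q\to Q$ is a bijection, and $f(C)=C$ for every cluster $C$.
   Context: Let $L$ be an infinite set, $-L=\{-r:r\in L\}$ a disjoint copy of $L$, and $0$ a new element; $L^\dagger=-L\cup\{0\}\cup L$ with $-(-r)=r$, $-0=0$. Adjoin $\pm\infty$ with $-(+\infty)=-\infty$ and set $\bar L^\dagger=L^\dagger\cup\{\pm\infty\}$. Points of $U=(\bar L^\dagger)^3$ have coordinates $x,y,z$. The edgeless cube $Q_L$ is the set of points of $U$ with exactly one coordinate in $\{\pm\infty\}$ (cells). The edged cube $\bar Q_L$ is the set of cells $(p,i)$ with $p\in U$, $i\in\{x,y,z\}$, $p_i\in\{\pm\infty\}$ ($i$ marks the face). For $i\in\{x,y,z\}$, $\alpha\in\bar L^\dagger$, the quarter-turn twist $T_{i,\alpha}$ is the permutation of cells fixing every cell whose point $p$ has $p_i\ne\alpha$ and acting on the others by $T_{x,\alpha}(\alpha,y,z)=(\alpha,-z,y)$, $T_{y,\alpha}(x,\alpha,z)=(z,\alpha,-x)$, $T_{z,\alpha}(x,y,\alpha)=(-y,x,\alpha)$ (in $\bar Q_L$ the marked coordinate is carried along by the rotation). Basic twists are $T,T^2,T^3$ for quarter-turn twists $T$. A basic sequence is a sequence $\langle\sigma_\eta:\eta<\theta\rangle$ of basic twists of ordinal length $\theta$. A labelling is a map $f$ from cells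 to $X\cup\{\mathrm{NaC}\}$ for a set $X\not\ni\mathrm{NaC}$; it is legal if it never takes value NaC. A twist $\sigma$ acts by $(\sigma f)(c)=f(\sigma^{-1}c)$. Applying $\langle\sigma_\eta:\eta<\theta\rangle$ to $f_0$ produces $f_{\eta+1}=\sigma_\eta f_\eta$, and for limit $\lambda\le\theta$, $f_\lambda(c)$ is the eventually constant value of $f_\eta(c)$ ($\eta<\lambda$) if it exists and NaC otherwise; $f_\theta$ is the terminal labelling. The identity labelling labels each cell by itself (values in the set of cells); a basic sequence is universally convergent if its terminal labelling from the identity labelling is legal. The cluster of a cell is its orbit under the group generated by all quarter-turn twists. *)

(* Defs.v *)
From Stdlib Require Import ClassicalEpsilon Relations List.
Set Implicit Arguments.

Inductive Ldag (L : Type) := LNeg (r : L) | LZero | LPos (r : L).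
Arguments LZero {L}.
Inductive Lbar (L : Type) := Fin (a : Ldag L) | PInf | MInf.
Arguments PInf {L}. Arguments MInf {L}.

Definition negd L (a : Ldag L) : Ldag L :=
  match a with LNeg r => LPos r | LZero => LZero | LPos r => LNeg r end.
Definition negbar L (a : Lbar L) : Lbar L :=
  match a with Fin b => Fin (negd b) | PInf => MInf | MInf => PInf end.
Definition is_inf L (a : Lbar L) : bool :=
  match a with Fin _ => false | _ => true end.

Definition point L := (Lbar L * Lbar L * Lbar L)%type.
Inductive axis := AX | AY | AZ.

Definition coord L (p : point L) (i : axis) : Lbar L :=
  match p, i with
  | (x, _, _), AX => x | (_, y, _), AY => y | (_, _, z), AZ => z end.

Definition rotp L (i : axis) (p : point L) : point L :=
  match p with (x, y, z) =>
  match i with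
  | AX => (x, negbar z, y)
  | AY => (z, y, negbar x)
  | AZ => (negbar y, x, z)
  end end.

(* how the marked face coordinate is carried along by the rotation *)
Definition rotm (i m : axis) : axis :=
  match i, m with
  | AX, AY => AZ | AX, AZ => AY
  | AY, AX => AZ | AY, AZ => AX
  | AZ, AX => AY | AZ, AY => AX
  | _, m => m end.

Inductive cube_kind := Edgeless | Edged.

Definition raw L (k : cube_kind) : Type :=
  match k with Edgeless => point L | Edged => (point L * axis)%type end.

Definition raw_pt L (k : cube_kind) : raw L k -> point L :=
  match k with Edgeless => fun p => p | Edged => fun q => fst q end.

Definition b2n (b : bool) : nat := if b then 1 else 0.

Definition raw_ok L (k : cube_kind) : raw L k -> bool :=
  match k with
  | Edgeless => fun p =>
      Nat.eqb (b2n (is_inf (coord p AX)) + b2n (is_inf (coord p AY))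
               + b2n (is_inf (coord p AZ))) 1
  | Edged => fun q => is_inf (coord (fst q) (snd q))
  end.

Definition cell L (k : cube_kind) := { c : raw L k | @raw_ok L k c = true }.
Arguments raw_ok {L} k _.
Arguments raw_pt {L} k _.

Definition raw_rot L (k : cube_kind) (i : axis) : raw L k -> raw L k :=
  match k with
  | Edgeless => fun p => rotp i p
  | Edged => fun q => (rotp i (fst q), rotm i (snd q))
  end.

Arguments raw_rot {L} k i _.

Lemma is_inf_neg L (a : Lbar L) : is_inf (negbar a) = is_inf a.
Proof. destruct a; reflexivity. Qed.

Lemma raw_rot_ok L k i (c : raw L k) : raw_ok k c = true -> raw_ok k (raw_rot k i c) = true.
Proof.
  destruct k; simpl.
  - destruct c as [[x y] z]; destruct i; simpl; rewrite ?is_inf_neg;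
      destruct (is_inf x), (is_inf y), (is_inf z); simpl; auto.
  - destruct c as [[[x y] z] m]; destruct i, m; simpl; rewrite ?is_inf_neg; auto.
Qed.

Definition qt_raw L k (i : axis) (alpha : Lbar L) (c : raw L k) : raw L k :=
  if excluded_middle_informative (coord (raw_pt k c) i = alpha)
  then raw_rot k i c else c.

Lemma qt_raw_ok L k i alpha (c : raw L k) :
  raw_ok k c = true -> raw_ok k (qt_raw k i alpha c) = true.
Proof.
  unfold qt_raw; destruct (excluded_middle_informative _); auto using raw_rot_ok.
Qed.

Definition qt L k (i : axis) (alpha : Lbar L) (c : cell L k) : cell L k :=
  exist _ (qt_raw k i alpha (proj1_sig c)) (@qt_raw_ok L k i alpha _ (proj2_sig c)).

Arguments qt {L} k i alpha c.
Arguments qt_raw {L} k i alpha c.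

Inductive pow3 := Pow1 | Pow2 | Pow3.
Definition pow_nat (n : pow3) : nat := match n with Pow1 => 1 | Pow2 => 2 | Pow3 => 3 end.

Record twist L := Twist { tw_axis : axis; tw_val : Lbar L; tw_pow : pow3 }.

Definition twist_fun L k (t : twist L) : cell L k -> cell L k :=
  Nat.iter (pow_nat (tw_pow t)) (qt k (tw_axis t) (tw_val t)).
(* its inverse sigma^{-1} = T_{i,alpha}^(4-n)  (since T^4 = id) *)
Definition twist_inv L k (t : twist L) : cell L k -> cell L k :=
  Nat.iter (4 - pow_nat (tw_pow t)) (qt k (tw_axis t) (tw_val t)).

Arguments twist_fun {L} k t _.
Arguments twist_inv {L} k t _.

(* labellings with values in X u {NaC}; None = NaC *)
Definition labelling L k (X : Type) := cell L k -> option X.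
Definition legal L k X (f : labelling L k X) := forall c, f c <> None.

Definition act L k X (t : twist L) (f : labelling L k X) : labelling L k X :=
  fun c => f (twist_inv k t c).

Arguments act {L} {k} {X} t f c.
Arguments legal {L} {k} {X} f.

(* ---------- transfinite sequences ----------
   A basic sequence of ordinal length theta is s : I -> twist L where (I, lt) is
   a well-order (of order type theta). Stages eta <= theta are  option I :
   Some e is the stage e < theta, None is theta itself. *)
Definition slt I (lt : I -> I -> Prop) (x y : option I) : Prop :=
  match x, y with
  | Some a, Some b => lt a b
  | Some _, None => True
  | None, _ => False
  end.

Lemma wf_slt I (lt : I -> I -> Prop) : well_founded lt -> well_founded (slt lt).
Proof.
  intros wf.
  assert (HS : forall a, Acc (slt lt) (Some a)).
  { intro a; induction (wf a) as [a _ IH]; constructor.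
    intros [b|] H; simpl in H; [apply IH; exact H | contradiction]. }
  intros [a|]; [apply HS|]. constructor; intros [b|] H; [apply HS | contradiction].
Qed.

Definition apply_at L k X I (s : I -> twist L) (y : option I) (f : labelling L k X)
  : labelling L k X :=
  match y with Some e => act (s e) f | None => f end.

Arguments apply_at {L} k {X} {I} s y f _.

Definition is_pred I (lt : I -> I -> Prop) (y x : option I) : Prop :=
  slt lt y x /\ forall z, slt lt y z -> ~ slt lt z x.

(* one step of the transfinite recursion, starting from the identity labelling:
   f_0 = identity, f_{eta+1} = sigma_eta f_eta, and at a limit lambda,
   f_lambda(c) = eventually constant value of f_eta(c) (eta < lambda), else NaC *)
Definition run_body L k I (lt : I -> I -> Prop) (s : I -> twist L) (x : option I)
  (rec : forall y, slt lt y x -> labelling L k (cell L k)) : labelling L k (cell L k) :=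
  match excluded_middle_informative (exists y, is_pred lt y x) with
  | left H =>
      let (y, Hy) := constructive_indefinite_description _ H in
      apply_at k s y (rec y (proj1 Hy))
  | right _ =>
      match excluded_middle_informative (exists y, slt lt y x) with
      | left _ => fun c =>
          match excluded_middle_informative
                  (exists v : option (cell L k), exists y0, slt lt y0 x /\
                     forall y (h : slt lt y x), (y0 = y \/ slt lt y0 y) -> rec y h c = v) with
          | left Hv => proj1_sig (constructive_indefinite_description _ Hv)
          | right _ => None
          end
      | right _ => fun c => Some c
      end
  end.

Arguments run_body {L} k {I} {lt} s x rec _.

Definition run_from_identity L k I (lt : I -> I -> Prop) (wf : well_founded lt)
  (s : I -> twist L) : option I -> labelling L k (cell L k) :=
  Fix (wf_slt wf) (fun _ => labelling L k (cell L k)) (run_body k s).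

Arguments run_from_identity {L} k {I} {lt} wf s _ _.

Definition terminal_from_identity L k I (lt : I -> I -> Prop) (wf : well_founded lt)
  (s : I -> twist L) : labelling L k (cell L k) :=
  run_from_identity k wf s None.

Arguments terminal_from_identity {L} k {I} {lt} wf s _.

Definition universally_convergent L k I (lt : I -> I -> Prop) (wf : well_founded lt)
  (s : I -> twist L) : Prop :=
  legal (terminal_from_identity k wf s).

Arguments universally_convergent {L} k {I} {lt} wf s.

Definition qt_step L k (c d : cell L k) : Prop :=
  exists i alpha, d = qt k i alpha c \/ c = qt k i alpha d.
Definition same_cluster L k : cell L k -> cell L k -> Prop :=
  clos_refl_trans (cell L k) (@qt_step L k).
Arguments qt_step {L} k c d.
Arguments same_cluster {L} k _ _.

(* Main.v *)
Require Import Defs.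
From Stdlib Require Import List.
From Stdlib Require Import Relations ClassicalEpsilon FunctionalExtensionality Eqdep_dec Bool.

Set Implicit Arguments.
Section Helpers.
Variable L : Type.

Lemma cell_eq k (c1 c2 : cell L k) : proj1_sig c1 = proj1_sig c2 -> c1 = c2.
Proof.
  destruct c1 as [r1 H1], c2 as [r2 H2]; simpl; intros ->.
  f_equal; apply UIP_dec, bool_dec.
Qed.

Lemma negbar_inj (a b : Lbar L) : negbar a = negbar b -> a = b.
Proof. destruct a as [[]| |], b as [[]| |]; simpl; intro H; congruence. Qed.

Lemma coord_rot k i (r : raw L k) :
  coord (raw_pt k (raw_rot k i r)) i = coord (raw_pt k r) i.
Proof. destruct k; [destruct r as [[x y] z] | destruct r as [[[x y] z] m]]; destruct i; reflexivity. Qed.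

Lemma raw_rot_inj k i (r1 r2 : raw L k) : raw_rot k i r1 = raw_rot k i r2 -> r1 = r2.
Proof.
  destruct k; [destruct r1 as [[x y] z], r2 as [[x' y'] z'] |
               destruct r1 as [[[x y] z] m], r2 as [[[x' y'] z'] m']];
  destruct i; simpl; intro H; inversion H; subst;
  repeat match goal with H : negbar _ = negbar _ |- _ => apply negbar_inj in H; subst end;
  try reflexivity;
  try (destruct m, m'; simpl in *; congruence).
Qed.

Lemma qt_raw_inj k i a (r1 r2 : raw L k) : qt_raw k i a r1 = qt_raw k i a r2 -> r1 = r2.
Proof.
  unfold qt_raw.
  destruct (excluded_middle_informative (coord (raw_pt k r1) i = a)) as [E1|E1];
  destruct (excluded_middle_informative (coord (raw_pt k r2) i = a)) as [E2|E2]; intro H.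
  - exact (raw_rot_inj _ _ _ _ H).
  - exfalso; apply E2; rewrite <- H, coord_rot; exact E1.
  - exfalso; apply E1; rewrite H, coord_rot; exact E2.
  - exact H.
Qed.

Lemma qt_inj k i a (c1 c2 : cell L k) : qt k i a c1 = qt k i a c2 -> c1 = c2.
Proof.
  intro H; apply cell_eq; apply (qt_raw_inj k i a).
  change (proj1_sig (qt k i a c1) = proj1_sig (qt k i a c2)); rewrite H; reflexivity.
Qed.

Lemma iter_inj k i a n (c1 c2 : cell L k) :
  Nat.iter n (qt k i a) c1 = Nat.iter n (qt k i a) c2 -> c1 = c2.
Proof. induction n; simpl; auto. intro H; apply IHn; eapply qt_inj; exact H. Qed.

Lemma iter_cluster k i a n (c : cell L k) : same_cluster k c (Nat.iter n (qt k i a) c).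
Proof.
  induction n; simpl. apply rt_refl.
  eapply rt_trans; [exact IHn|]. apply rt_step. exists i, a. left; reflexivity.
Qed.

Lemma cluster_sym k (c d : cell L k) : same_cluster k c d -> same_cluster k d c.
Proof.
  induction 1. apply rt_step. destruct H as [i [a H]]. exists i, a; tauto.
  apply rt_refl. eapply rt_trans; eauto.
Qed.

Definition absb (a : Lbar L) : Lbar L :=
  match a with Fin (LNeg r) => Fin (LPos r) | MInf => PInf | b => b end.
Lemma absb_neg a : absb (negbar a) = absb a.
Proof. destruct a as [[]| |]; reflexivity. Qed.

Definition Aof (p : point L) : list (Lbar L) :=
  absb (coord p AX) :: absb (coord p AY) :: absb (coord p AZ) :: nil.
Definition A k (r : raw L k) := Aof (raw_pt k r).

Lemma A_rot k i (r : raw L k) a : In a (A k (raw_rot k i r)) <-> In a (A k r).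
Proof.
  destruct k; [destruct r as [[x y] z] | destruct r as [[[x y] z] m]];
  destruct i; unfold A, Aof; simpl; rewrite ?absb_neg; tauto.
Qed.

Lemma A_qt k i al (r : raw L k) a : In a (A k (qt_raw k i al r)) <-> In a (A k r).
Proof.
  unfold qt_raw; destruct (excluded_middle_informative _); [apply A_rot | tauto].
Qed.

Lemma cluster_A k (c d : cell L k) : same_cluster k c d ->
  forall a, In a (A k (proj1_sig c)) <-> In a (A k (proj1_sig d)).
Proof.
  induction 1; intro a.
  - destruct H as [i [al [H|H]]]; subst; first [apply A_qt | symmetry; apply A_qt].
  - tauto.
  - rewrite IHclos_refl_trans1; auto.
Qed.

Definition V (x y z : Lbar L) := x :: negbar x :: y :: negbar y :: z :: negbar z :: nil.
Definition triples (l : list (Lbar L)) : list (point L) :=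
  flat_map (fun u => flat_map (fun v => map (fun w => (u, v, w)) l) l) l.
Lemma in_triples l u v w : In u l -> In v l -> In w l -> In (u, v, w) (triples l).
Proof.
  intros Hu Hv Hw. unfold triples. apply in_flat_map. exists u; split; auto.
  apply in_flat_map. exists v; split; auto. apply in_map_iff. exists w; auto.
Qed.

Lemma absb_eq a b : absb a = absb b -> a = b \/ a = negbar b.
Proof. destruct a as [[]| |], b as [[]| |]; simpl; intro H; inversion H; subst; auto. Qed.

Lemma absb_in a x y z : In (absb a) (absb x :: absb y :: absb z :: nil) -> In a (V x y z).
Proof.
  simpl; intros [H|[H|[H|[]]]]; symmetry in H; apply absb_eq in H;
  destruct H as [ -> | -> ]; unfold V; simpl; tauto.
Qed.

Definition Vp (p : point L) := V (coord p AX) (coord p AY) (coord p AZ).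

Definition rawlist k : raw L k -> list (raw L k) :=
  match k with
  | Edgeless => fun p => triples (Vp p)
  | Edged => fun q => flat_map (fun p => map (fun m => (p, m)) (AX :: AY :: AZ :: nil))
                        (triples (Vp (fst q)))
  end.

Lemma rawlist_cover k (r r0 : raw L k) : incl (A k r) (A k r0) -> In r (rawlist k r0).
Proof.
  intro H. unfold A, Aof in H.
  pose proof (H _ (or_introl eq_refl)) as HX; apply absb_in in HX.
  pose proof (H _ (or_intror (or_introl eq_refl))) as HY; apply absb_in in HY.
  pose proof (H _ (or_intror (or_intror (or_introl eq_refl)))) as HZ; apply absb_in in HZ.
  destruct k; [destruct r as [[x y] z] | destruct r as [[[x y] z] m]];
    cbn [raw_pt coord fst] in HX, HY, HZ; cbn [rawlist].
  - apply in_triples; unfold Vp; assumption.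
  - apply in_flat_map. exists (x, y, z). split. apply in_triples; unfold Vp; assumption.
    apply in_map_iff. exists m; split; auto. destruct m; simpl; auto.
Qed.

Definition mk k (r : raw L k) : list (cell L k) :=
  match bool_dec (raw_ok k r) true with
  | left H => exist _ r H :: nil
  | right _ => nil
  end.

Definition cover k (c : cell L k) : list (cell L k) := flat_map (@mk k) (rawlist k (proj1_sig c)).

Lemma cover_ok k (c d : cell L k) : same_cluster k c d -> In d (cover c).
Proof.
  intro H. apply in_flat_map. exists (proj1_sig d). split.
  - apply rawlist_cover. intros a Ha. apply (cluster_A H). exact Ha.
  - unfold mk. destruct (bool_dec _ _) as [E|E].
    + left. apply cell_eq; reflexivity.
    + exfalso; apply E, (proj2_sig d).
Qed.

Lemma NoDup_map_inj (X Y : Type) (g : X -> Y) (l : list X) :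
  (forall a b, g a = g b -> a = b) -> NoDup l -> NoDup (map g l).
Proof.
  intros Hg; induction 1; simpl; constructor; auto.
  intro Hin; apply in_map_iff in Hin; destruct Hin as [y [Hy Hy']].
  apply Hg in Hy; subst; contradiction.
Qed.

End Helpers.
Unset Implicit Arguments.

Theorem mainTheorem19 (L : Type) (L_infinite : forall l : list L, exists x, ~ In x l)
  (k : cube_kind)
  (I : Type) (lt : I -> I -> Prop) (lt_wf : well_founded lt)
  (lt_trans : forall a b c, lt a b -> lt b c -> lt a c)
  (lt_total : forall a b, lt a b \/ a = b \/ lt b a)
  (s : I -> twist L) :
  universally_convergent k lt_wf s ->
  exists g : cell L k -> cell L k,
    (forall c, terminal_from_identity k lt_wf s c = Some (g c)) /\
    (forall c d, g c = g d -> c = d) /\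
    (forall d, exists c, g c = d) /\
    (forall c0 d, same_cluster k c0 d <-> exists e, same_cluster k c0 e /\ g e = d).
Proof.
  intro Hconv.
  set (R := run_from_identity k lt_wf s).
  assert (Req : forall x, R x = @run_body L k I lt s x (fun y _ => R y)).
  { intro x. unfold R, run_from_identity.
    apply (Fix_eq (wf_slt lt_wf) (fun _ => labelling L k (cell L k)) (run_body k s)).
    intros x0 f g0 H.
    assert (f = g0) as ->; [|reflexivity].
    apply functional_extensionality_dep; intro y.
    apply functional_extensionality_dep; intro p. apply H. }
  set (Inv := fun f : labelling L k (cell L k) =>
    (forall c d, f c = Some d -> same_cluster k c d) /\
    (forall c c' d, f c = Some d -> f c' = Some d -> c = c')).
  assert (Hinv : forall x, Inv (R x)).
  { apply (well_founded_ind (wf_slt lt_wf)). intros x IH.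
    rewrite Req. unfold run_body.
    destruct (excluded_middle_informative (exists y, is_pred lt y x)) as [H|H].
    - destruct (constructive_indefinite_description _ H) as [y Hy].
      destruct y as [e|]; [|destruct Hy as [[] _]].
      destruct (IH (Some e) (proj1 Hy)) as [IH1 IH2].
      cbv beta. simpl. unfold act. split.
      + intros c d Hc. apply IH1 in Hc.
        eapply rt_trans; [apply iter_cluster | exact Hc].
      + intros c c' d H1 H2. eapply iter_inj; exact (IH2 _ _ _ H1 H2).
    - destruct (excluded_middle_informative (exists y, slt lt y x)) as [H2|H2].
      + split.
        * intros c d. cbv beta.
          destruct (excluded_middle_informative _) as [Hv|Hv]; [|discriminate].
          destruct (constructive_indefinite_description _ Hv) as [v [y0 [Hy0 Hall]]].
          simpl; intro; subst v.
          apply (proj1 (IH y0 Hy0)). apply (Hall y0 Hy0). left; reflexivity.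
        * intros c c' d. cbv beta.
          destruct (excluded_middle_informative _) as [Hv|Hv]; [|discriminate].
          destruct (constructive_indefinite_description _ Hv) as [v [y0 [Hy0 Hall]]].
          simpl; intro; subst v.
          destruct (excluded_middle_informative _) as [Hv'|Hv']; [|discriminate].
          destruct (constructive_indefinite_description _ Hv') as [v [y1 [Hy1 Hall']]].
          simpl; intro; subst v.
          destruct y0 as [a|]; [|destruct Hy0].
          destruct y1 as [b|]; [|destruct Hy1].
          destruct (lt_total a b) as [Hab|[Hab|Hab]].
          -- apply (proj2 (IH _ Hy1)) with d.
             apply (Hall _ Hy1). right; exact Hab.
             apply (Hall' _ Hy1). left; reflexivity.
          -- subst b. apply (proj2 (IH _ Hy1)) with d.
             apply (Hall _ Hy1). left; reflexivity.
             apply (Hall' _ Hy1). left; reflexivity.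
          -- apply (proj2 (IH _ Hy0)) with d.
             apply (Hall _ Hy0). left; reflexivity.
             apply (Hall' _ Hy0). right; exact Hab.
      + split.
        * intros c d Hc; inversion Hc; subst; apply rt_refl.
        * intros c c' d H3 H4; inversion H3; inversion H4; subst; reflexivity. }
  destruct (Hinv None) as [Hcl Hinj].
  set (f := R None) in *.
  assert (Hf : forall c, f c = Some (match f c with Some d => d | None => c end)).
  { intro c. destruct (f c) eqn:E; [reflexivity|]. exfalso; exact (Hconv c E). }
  set (g := fun c => match f c with Some d => d | None => c end) in *.
  assert (ginj : forall c c', g c = g c' -> c = c').
  { intros c c' E. apply (Hinj c c' (g c)); [apply Hf | rewrite E; apply Hf]. }
  assert (gcl : forall c, same_cluster k c (g c)) by (intro c; apply Hcl, Hf).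
  assert (gsurj : forall d, exists c, g c = d).
  { intro d.
    assert (dec : forall x y : cell L k, {x = y} + {x <> y})
      by (intros; apply excluded_middle_informative).
    set (lst := nodup dec (filter (fun x => if excluded_middle_informative (same_cluster k d x)
                                            then true else false) (cover d))).
    assert (Hl : forall x, In x lst <-> same_cluster k d x).
    { intro x. unfold lst. rewrite nodup_In, filter_In. split.
      - intros [_ H]. destruct (excluded_middle_informative _); [assumption|discriminate].
      - intro H. split; [apply cover_ok; exact H|].
        destruct (excluded_middle_informative _); [reflexivity|contradiction]. }
    assert (Hnd : NoDup (map g lst)) by (apply NoDup_map_inj; [exact ginj | apply NoDup_nodup]).
    assert (Hincl : incl lst (map g lst)).
    { apply NoDup_length_incl; [exact Hnd | rewrite length_map; apply le_n |].
      intros y Hy. apply in_map_iff in Hy. destruct Hy as [x [<- Hx]].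
      apply Hl. apply Hl in Hx. eapply rt_trans; [exact Hx | apply gcl]. }
    assert (Hd : In d lst) by (apply Hl; apply rt_refl).
    apply Hincl, in_map_iff in Hd. destruct Hd as [x [Hx _]]. exists x; exact Hx. }
  exists g. split; [exact Hf|]. split; [exact ginj|]. split; [exact gsurj|].
  intros c0 d. split.
  - intro H. destruct (gsurj d) as [e He]. exists e. split; [|exact He].
    eapply rt_trans; [exact H|]. apply cluster_sym. rewrite <- He. apply gcl.
  - intros [e [H1 H2]]. subst d. eapply rt_trans; [exact H1 | apply gcl].
Qed.
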